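(* Let $G$ be a ribbon graph. If the set $\{\varepsilon(G^A): A\subseteq E(G)\}$ contains two consecutive integers $k$ and $k+1$, then every integer $m$ with $k+2\le m\le \varepsilon_M(G)$ belongs to $\{\varepsilon(G^A): A\subseteq E(G)\}$.
   Context: A ribbon graph $G$ is a (possibly non-orientable) surface with boundary given as a union of a set $V(G)$ of vertex discs and a set $E(G)$ of edge discs such that vertices and edges meet in disjoint line segments, each such segment lies on the boundary of exactly one vertex and exactly one edge, and each edge contains exactly two such segments. With $v(G),e(G),f(G),c(G)$ the numbers of vertices, edges, boundary components and connected components, the Euler genus is $\varepsilon(G)=2c(G)-(v(G)-e(G)+f(G))$. For $A\subseteq E(G)$, the partial dual $G^A$ is obtained by gluing a disc along each boundary component of the spanning ribbon subgraph $(V(G),A)$ (these become the vertices of $G^A$), removing the interiors of all vertex discs of $G$, and keeping the edge discs unchanged. The maximum partial-dual Euler genus is $\varepsilon_M(G)=\max\{\varepsilon(G^A):A\subseteq E(G)\}$. *)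

(* Defs.v *)
(* Ribbon graphs encoded combinatorially as graph-encoded maps
   (gems / flag systems). *)
From mathcomp Require Import all_boot all_order all_algebra.
Set Implicit Arguments. Unset Strict Implicit. Unset Printing Implicit Defensive.
Import Order.TTheory GRing.Theory Num.Theory.
Local Open Scope ring_scope.

Section RibbonGraphs.
Variable D : finType. (* the flags of the ribbon graph *)

Definition gen2 (f g : D -> D) : rel D := fun x y => (y == f x) || (y == g x).
Definition gen3 (f g h : D -> D) : rel D :=
  fun x y => [|| y == f x, y == g x | y == h x].

Definition norb (r : rel D) : nat := #|[set [set y | connect r x y] | x : D]|.

(* Axioms of a (possibly non-orientable, possibly disconnected) combinatorial map:
   a0 changes the vertex, a1 changes the edge, a2 changes the side.
   vertices = <a1,a2>-orbits, edges = <a0,a2>-orbits, boundary components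
   (faces) = <a0,a1>-orbits, connected components = <a0,a1,a2>-orbits. *)
Definition is_ribbon_graph (a0 a1 a2 : D -> D) : Prop :=
  [/\ involutive a0, involutive a1 & involutive a2] /\
  [/\ (forall x, a0 x != x), (forall x, a1 x != x) & (forall x, a2 x != x)] /\
  (forall x, a0 (a2 x) = a2 (a0 x)) /\ (forall x, a0 x != a2 x).

(* A set of flags closed under a0 and a2 = a union of edges, i.e. a subset of E(G) *)
Definition edge_set (a0 a2 : D -> D) (A : {set D}) : bool :=
  [forall x, (x \in A) ==> ((a0 x \in A) && (a2 x \in A))].

(* Euler genus eps = 2c - (v - e + f); [iso] counts isolated (edgeless) vertices,
   each of which is a vertex, a boundary component and a connected component. *)
Definition euler_genus (a0 a1 a2 : D -> D) (iso : nat) : int :=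
  2 * (norb (gen3 a0 a1 a2) + iso)%:Z
  - ((norb (gen2 a1 a2) + iso)%:Z - (norb (gen2 a0 a2))%:Z
     + (norb (gen2 a0 a1) + iso)%:Z).

(* Partial dual w.r.t. the edge set A: swap a0 and a2 on the flags of A. *)
Definition pd0 (a0 a2 : D -> D) (A : {set D}) (x : D) : D :=
  if x \in A then a2 x else a0 x.
Definition pd2 (a0 a2 : D -> D) (A : {set D}) (x : D) : D :=
  if x \in A then a0 x else a2 x.

Definition pd_genus (a0 a1 a2 : D -> D) (iso : nat) (A : {set D}) : int :=
  euler_genus (pd0 a0 a2 A) a1 (pd2 a0 a2 A) iso.

(* eps_M(G) = max over A of eps(G^A) (the empty set is always an edge set) *)
Definition max_pd_genus (a0 a1 a2 : D -> D) (iso : nat) : int :=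
  \big[Num.max/pd_genus a0 a1 a2 iso set0]_(A : {set D} | edge_set a0 a2 A)
     pd_genus a0 a1 a2 iso A.

End RibbonGraphs.

(* Main.v *)
Require Import Defs.
From mathcomp Require Import all_boot all_order all_algebra.
From mathcomp Require Import all_fingroup zify.
From Stdlib Require Import Classical.
Set Implicit Arguments. Unset Strict Implicit. Unset Printing Implicit Defensive.
Local Notation norb := Defs.norb.
Local Notation gen2 := Defs.gen2.

Section TwoInv.
Variable T : finType.
Variables b t : T -> T.
Hypothesis bK : involutive b.
Hypothesis tK : involutive t.
Hypothesis bF : forall x, b x != x.
Hypothesis tF : forall x, t x != x.

Definition cls x := [set y | connect (gen2 b t) x y].

Lemma gen2_sym : symmetric (gen2 b t).
Proof.
move=> x y; rewrite /gen2.
apply/orP/orP => -[/eqP->|/eqP->]; by [left; rewrite bK | right; rewrite tK].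
Qed.

Lemma csym : connect_sym (gen2 b t).
Proof. exact: sym_connect_sym gen2_sym. Qed.

Variable s : {perm T}.
Hypothesis sE : forall x, s x = b (t x).

Lemma sVE x : (s^-1)%g x = t (b x).
Proof. by apply: (@perm_inj _ s); rewrite permKV sE tK bK. Qed.

Lemma b_s z : b (s z) = (s^-1)%g (b z).
Proof. by rewrite sE sVE !bK. Qed.

Lemma t_eq z : t z = b (s z).
Proof. by rewrite sE bK. Qed.

Lemma b_iter i x : b (iter i s x) = iter i (s^-1)%g (b x).
Proof. by elim: i => //= i IH; rewrite b_s IH. Qed.

Lemma mem_iter i x : iter i s x \in porbit s x.
Proof. by rewrite -permX mem_porbit. Qed.

Lemma porbit_b x y : y \in porbit s x -> b y \in porbit s (b x).
Proof.
move=> /porbitP[i ->]; rewrite permX b_iter -porbitV.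
by rewrite -permX mem_porbit.
Qed.

Lemma porbit_s x y : y \in porbit s x -> s y \in porbit s x.
Proof.
move=> /porbitP[i ->]; rewrite -permM -expgSr; exact: mem_porbit.
Qed.

Lemma porbit_same x y z : y \in porbit s x -> y \in porbit s z -> porbit s x = porbit s z.
Proof.
move=> h1 h2; apply/eqP; rewrite eq_porbit_mem.
by rewrite -(eqP (_ : porbit s y == porbit s z)) ?eq_porbit_mem // porbit_sym.
Qed.

Lemma cls_sub x y : connect (gen2 b t) x y -> y \in porbit s x :|: porbit s (b x).
Proof.
move=> c.
have cl : closed (gen2 b t) (porbit s x :|: porbit s (b x)).
  have hb u : u \in porbit s x :|: porbit s (b x) -> b u \in porbit s x :|: porbit s (b x).
    rewrite !inE => /orP[h|h]; apply/orP; [right|left]; first exact: porbit_b.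
    by rewrite -[x]bK; apply: porbit_b.
  have ht u : u \in porbit s x :|: porbit s (b x) -> t u \in porbit s x :|: porbit s (b x).
    move=> hu; rewrite t_eq; apply: hb.
    by move: hu; rewrite !inE => /orP[h|h]; apply/orP; [left|right]; apply: porbit_s.
  move=> u v /orP[/eqP->|/eqP->]; apply/idP/idP => h.
  - exact: hb.
  - by rewrite -[u]bK; apply: hb.
  - exact: ht.
  - by rewrite -[u]tK; apply: ht.
by rewrite -(closed_connect cl c) inE porbit_id.
Qed.

Lemma porbit_cls x y : y \in porbit s x -> connect (gen2 b t) x y.
Proof.
move=> /porbitP[i ->]; rewrite permX; elim: i => [|i IH] /=; first exact: connect0.
apply: (connect_trans IH); set z := iter i s x.
have h1 : gen2 b t z (t z) by rewrite /gen2 eqxx orbT.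
have h2 : gen2 b t (t z) (s z) by rewrite /gen2 sE eqxx.
exact: (connect_trans (connect1 h1) (connect1 h2)).
Qed.

Lemma b_notin x : b x \notin porbit s x.
Proof.
apply/negP => /porbitP[k]; rewrite permX => hk.
have key j : j <= k -> b (iter j s x) = iter (k - j) s x.
  elim: j => [|j IH] hj; first by rewrite subn0.
  rewrite iterS b_s IH ?(ltnW hj) //.
  have -> : k - j = (k - j.+1).+1 by rewrite subnSK.
  by rewrite iterS permK.
have hk2 := odd_double_half k.
set m := k./2 in hk2.
case: (odd k) hk2 => /= hk2.
- have hle : m.+1 <= k by lia.
  have hkm : k - m.+1 = m by lia.
  have := key _ hle; rewrite hkm iterS -t_eq => /eqP; by rewrite (negbTE (tF _)).
- have hle : m <= k by lia.
  have hkm : k - m = m by lia.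
  have := key _ hle; rewrite hkm => /eqP; by rewrite (negbTE (bF _)).
Qed.

Definition alt (P : {set T}) :=
  forall x, (b x \in P) = (x \notin P) /\ (t x \in P) = (x \notin P).

Lemma alt_s P x : alt P -> (s x \in P) = (x \in P).
Proof. by move=> hP; rewrite sE (hP _).1 (hP _).2 negbK. Qed.

Lemma alt_iter P x i : alt P -> (iter i s x \in P) = (x \in P).
Proof. by move=> hP; elim: i => //= i IH; rewrite alt_s. Qed.

Lemma alt_porbit P x y : alt P -> y \in porbit s x -> (y \in P) = (x \in P).
Proof. by move=> hP /porbitP[i ->]; rewrite permX alt_iter. Qed.

Lemma alt_compl P : alt P -> alt (~: P).
Proof. by move=> hP x; rewrite !inE (hP x).1 (hP x).2. Qed.

Lemma cls_id x : x \in cls x.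
Proof. by rewrite inE connect0. Qed.

Lemma cls_eq x y : connect (gen2 b t) x y -> cls x = cls y.
Proof.
move=> c; apply/setP => z; rewrite !inE; apply/idP/idP => h.
  by apply: connect_trans h; rewrite csym.
exact: connect_trans h.
Qed.

Lemma cls_b x : cls (b x) = cls x.
Proof. by apply/esym/cls_eq/connect1; rewrite /gen2 eqxx. Qed.

Lemma core P x : alt P -> x \in P -> porbit s x = cls x :&: P.
Proof.
move=> hP xP; apply/setP => y; rewrite !inE; apply/idP/idP.
  by move=> hy; rewrite porbit_cls //= (alt_porbit hP hy).
case/andP => c yP; have := cls_sub c; rewrite inE => /orP[//|hy].
by move: yP; rewrite (alt_porbit hP hy) (hP x).1 xP.
Qed.

Lemma norbE : norb (gen2 b t) = #|[set cls x | x in T]|.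
Proof. by []. Qed.

Lemma card_half P : alt P -> #|[set porbit s x | x in P]| = norb (gen2 b t).
Proof.
move=> hP.
have e1 : [set porbit s x | x in P] = (fun S => S :&: P) @: [set cls x | x in P].
  by rewrite -imset_comp; apply: eq_in_imset => x hx; rewrite /= (core hP).
rewrite e1 card_in_imset; last first.
  move=> _ _ /imsetP[x hx ->] /imsetP[y hy ->] /= h.
  have : x \in cls y :&: P by rewrite -h inE cls_id hx.
  by rewrite inE => /andP[]; rewrite inE => /cls_eq ->.
rewrite norbE; apply: eq_card => S; apply/imsetP/imsetP => -[x hx ->].
  by exists x.
case/boolP: (x \in P) => xP; first by exists x.
by exists (b x); rewrite ?cls_b // (hP x).1.
Qed.

Lemma porbits_disj P x y : alt P -> x \in P -> y \notin P -> porbit s x != porbit s y.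
Proof.
move=> hP xP yP; rewrite eq_porbit_mem; apply/negP => h.
by move: yP; rewrite -(alt_porbit hP h) xP.
Qed.

Lemma card_porbits P : alt P -> #|porbits s| = (norb (gen2 b t)).*2.
Proof.
move=> hP.
have -> : porbits s = [set porbit s x | x in P] :|: [set porbit s x | x in ~: P].
  apply/setP => S; rewrite inE; apply/imsetP/orP.
    by case=> x _ ->; case/boolP: (x \in P) => xP; [left|right]; apply/imsetP; exists x; rewrite ?inE.
  by case=> /imsetP[x _ ->]; exists x.
have hI : [set porbit s x | x in P] :&: [set porbit s x | x in ~: P] = set0.
  apply/setP => S; rewrite !inE; apply/negP => /andP[/imsetP[x hx ->] /imsetP[y hy]].
  by rewrite inE in hy; apply/eqP; apply: porbits_disj hy.
have := cardsUI [set porbit s x | x in P] [set porbit s x | x in ~: P].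
rewrite hI cards0 addn0 => ->.
by rewrite card_half // card_half ?addnn //; apply: alt_compl.
Qed.

Lemma alt_exists : exists P, alt P.
Proof.
pose r := fingraph.root (gen2 b t).
exists [set x | x \in porbit s (r x)].
have key y : (y \in porbit s (r y)) || (y \in porbit s (b (r y))).
  by rewrite -in_setU; apply: cls_sub; rewrite csym connect_root.
have rb y : r (b y) = r y.
  by apply/esym/(fingraph.rootP csym)/connect1; rewrite /gen2 eqxx.
have rt y : r (t y) = r y.
  by apply/esym/(fingraph.rootP csym)/connect1; rewrite /gen2 eqxx orbT.
have rs y : r (s y) = r y by rewrite sE rb rt.
have hb y : (b y \in porbit s (r y)) = (y \notin porbit s (r y)).
  case/boolP: (y \in porbit s (r y)) => hy /=.
    apply/negP => hby; have := porbit_b hy => hby2.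
    have := porbit_same hby hby2 => e.
    by move: (b_notin (r y)); rewrite e porbit_id.
  move: (key y); rewrite (negbTE hy) /= => h.
  by have := porbit_b h; rewrite bK.
move=> x; rewrite !inE rb rt; split; first exact: hb.
rewrite t_eq -(rs x) hb rs; congr (~~ _).
apply/idP/idP => h; last by apply: porbit_s.
have : s x \in porbit s x by rewrite -[s x]/(iter 1 s x) mem_iter.
by move=> hx; rewrite -(porbit_same hx h) porbit_id.
Qed.

Lemma card_porbits2 : #|porbits s| = (norb (gen2 b t)).*2.
Proof. by have [P hP] := alt_exists; apply: (card_porbits hP). Qed.

End TwoInv.

Section Rho.
Variable T : finType.
Variables b t : T -> T.
Hypothesis bK : involutive b.
Hypothesis tK : involutive t.
Hypothesis bF : forall x, b x != x.
Hypothesis tF : forall x, t x != x.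
Variable P : {set T}.
Hypothesis hP : alt b t P.

Lemma bt_inj : injective (fun x => b (t x)).
Proof. by move=> x y /(can_inj bK) /(can_inj tK). Qed.

Lemma card_rho (s2 : {perm T}) :
  (forall x, s2 x = if x \in P then b (t x) else x) ->
  #|porbits s2| = norb (gen2 b t) + #|~: P|.
Proof.
move=> s2E.
pose s := perm bt_inj.
have sE : forall x, s x = b (t x) by move=> x; rewrite permE.
have itE i x : x \in P -> iter i s2 x = iter i s x.
  move=> xP; elim: i => //= i ->; rewrite s2E.
  by rewrite (alt_iter sE _ _ hP) xP sE.
have po1 x : x \in P -> porbit s2 x = porbit s x.
  move=> xP; apply/setP => y; apply/porbitP/porbitP => -[i ->]; exists i.
    by rewrite !permX itE.
  by rewrite !permX itE.
have po2 x : x \notin P -> porbit s2 x = [set x].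
  move=> xP; apply/setP => y; rewrite inE; apply/porbitP/eqP => [[i ->]|->].
    by rewrite permX_fix // s2E (negbTE xP).
  by exists 0; rewrite expg0 perm1.
have -> : porbits s2 = [set porbit s x | x in P] :|: [set [set x] | x in ~: P].
  apply/setP => S; rewrite inE; apply/imsetP/orP.
    case=> x _ ->; case/boolP: (x \in P) => xP.
      by left; apply/imsetP; exists x; rewrite ?po1.
    by right; apply/imsetP; exists x; rewrite ?inE ?po2.
  case=> /imsetP[x hx ->]; exists x => //; first by rewrite po1.
  by rewrite inE in hx; rewrite po2.
have hI : [set porbit s x | x in P] :&: [set [set x] | x in ~: P] = set0.
  apply/setP => S; rewrite !inE; apply/negP => /andP[/imsetP[x hx ->] /imsetP[y hy e]].
  rewrite inE in hy; have : y \in porbit s x by rewrite e inE.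
  by move=> h; move: hy; rewrite (alt_porbit sE hP h) hx.
have := cardsUI [set porbit s x | x in P] [set [set x] | x in ~: P].
rewrite hI cards0 addn0 => ->.
rewrite (card_half bK tK sE hP) card_imset //; exact: set1_inj.
Qed.

End Rho.



Section Gem.
Variable T : finType.
Variables a0 a1 a2 : T -> T.
Hypothesis a0K : involutive a0.
Hypothesis a1K : involutive a1.
Hypothesis a2K : involutive a2.
Hypothesis a0F : forall x, a0 x != x.
Hypothesis a1F : forall x, a1 x != x.
Hypothesis a2F : forall x, a2 x != x.
Hypothesis a02C : forall x, a0 (a2 x) = a2 (a0 x).
Hypothesis a02N : forall x, a0 x != a2 x.

Definition closedE (Z : {set T}) :=
  forall x, (a0 x \in Z) = (x \in Z) /\ (a2 x \in Z) = (x \in Z).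

Definition tau (Z : {set T}) x := if x \in Z then a0 x else a2 x.

Lemma tauK Z : closedE Z -> involutive (tau Z).
Proof.
move=> hZ x; rewrite /tau; case xZ: (x \in Z).
  by rewrite (hZ x).1 xZ a0K.
by rewrite (hZ x).2 xZ a2K.
Qed.

Lemma tauF Z x : tau Z x != x.
Proof. by rewrite /tau; case: ifP. Qed.

Definition Nv Z := norb (gen2 a1 (tau Z)).

Lemma perm_tau Z : closedE Z -> exists s : {perm T}, forall y, s y = a1 (tau Z y).
Proof.
move=> hZ; exists (perm (bt_inj a1K (tauK hZ))) => y; by rewrite permE.
Qed.

Lemma Nv_cycles Z (s : {perm T}) : closedE Z -> (forall y, s y = a1 (tau Z y)) ->
  #|porbits s| = (Nv Z).*2.
Proof. move=> hZ sE; exact: (card_porbits2 a1K (tauK hZ) a1F (@tauF Z) sE). Qed.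

Definition sd (A B : {set T}) := [set z | (z \in A) (+) (z \in B)].
Definition blk x := [set x; a0 x; a2 x; a0 (a2 x)].

Lemma blkP x y : reflect [\/ y = x, y = a0 x, y = a2 x | y = a0 (a2 x)] (y \in blk x).
Proof.
rewrite !inE; apply: (iffP idP).
  case/orP => [/orP[/orP[/eqP->|/eqP->]|/eqP->]|/eqP->];
  by [apply: Or41|apply: Or42|apply: Or43|apply: Or44].
by case=> ->; rewrite eqxx ?orbT.
Qed.

Lemma blk_in Z x y : closedE Z -> y \in blk x -> (y \in Z) = (x \in Z).
Proof.
move=> hZ /blkP[]->; rewrite ?(hZ _).1 ?(hZ _).2 //.
Qed.

Lemma a02N' x : a0 (a2 x) != x.
Proof. by apply: contraNneq (a02N x) => h; rewrite -{1}h a0K. Qed.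

Lemma closed_sd A B : closedE A -> closedE B -> closedE (sd A B).
Proof. by move=> hA hB x; rewrite !inE (hA x).1 (hB x).1 (hA x).2 (hB x).2. Qed.

Lemma closed_compl A : closedE A -> closedE (~: A).
Proof. by move=> hA x; rewrite !inE (hA x).1 (hA x).2. Qed.

Lemma closed_blk x : closedE (blk x).
Proof.
have h0 y : y \in blk x -> a0 y \in blk x.
  by case/blkP=> ->; apply/blkP; rewrite ?a0K; [apply: Or42|apply: Or41|apply: Or44|apply: Or43].
have h2 y : y \in blk x -> a2 y \in blk x.
  case/blkP=> ->; apply/blkP; rewrite ?a2K.
  - by apply: Or43.
  - by rewrite -a02C; apply: Or44.
  - by apply: Or41.
  - by rewrite -a02C a2K; apply: Or42.
move=> y; split; apply/idP/idP => h.
- by rewrite -[y]a0K; apply: h0.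
- exact: h0.
- by rewrite -[y]a2K; apply: h2.
- exact: h2.
Qed.

Lemma compl_sd A B : ~: sd A B = sd (~: A) B.
Proof. by apply/setP => z; rewrite !inE; case: (z \in A); case: (z \in B). Qed.

Lemma toggle_perm Z x (s : {perm T}) : closedE Z -> (forall y, s y = a1 (tau Z y)) ->
  forall y, (tperm (a0 x) (a2 x) * (tperm x (a0 (a2 x)) * s))%g y = a1 (tau (sd Z (blk x)) y).
Proof.
move=> hZ sE y; rewrite !permM sE; congr (a1 _).
have d1 : x != a0 x by rewrite eq_sym a0F.
have d2 : x != a2 x by rewrite eq_sym a2F.
have d3 : x != a0 (a2 x) by rewrite eq_sym a02N'.
have d4 : a0 x != a2 x by apply: a02N.
have d5 : a0 x != a0 (a2 x) by apply/eqP => /(can_inj a0K) /eqP; rewrite (negbTE d2).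
have d6 : a2 x != a0 (a2 x) by rewrite eq_sym a0F.
have bx := @blk_in Z x _ hZ.
rewrite /tau !inE.
case/boolP: (y \in blk x) => yb.
- rewrite (bx _ yb); case/blkP: yb => ->.
  + rewrite (tpermD (a0F x) (a2F x)) tpermL (bx (a0 (a2 x))); last by apply/blkP; apply: Or44.
    by case: (x \in Z); rewrite /= ?eqxx ?orbT /=; do 3 rewrite ?a0K ?a2K ?a02C.
  + rewrite tpermL (tpermD d2 (a0F (a2 x))) (bx (a2 x)); last by apply/blkP; apply: Or43.
    by case: (x \in Z); rewrite /= ?eqxx ?orbT /=; do 3 rewrite ?a0K ?a2K ?a02C.
  + rewrite tpermR (tpermD d1 _) ?(eq_sym (a0 (a2 x))) // (bx (a0 x)); last by apply/blkP; apply: Or42.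
    by case: (x \in Z); rewrite /= ?eqxx ?orbT /=; do 3 rewrite ?a0K ?a2K ?a02C.
  + rewrite (tpermD d5 d6) tpermR.
    by case: (x \in Z); rewrite /= ?eqxx ?orbT /=; do 3 rewrite ?a0K ?a2K ?a02C.
- have ne1 : y != x by apply: contraNneq yb => ->; apply/blkP; apply: Or41.
  have ne2 : y != a0 x by apply: contraNneq yb => ->; apply/blkP; apply: Or42.
  have ne3 : y != a2 x by apply: contraNneq yb => ->; apply/blkP; apply: Or43.
  have ne4 : y != a0 (a2 x) by apply: contraNneq yb => ->; apply/blkP; apply: Or44.
  have m1 : x != y by rewrite eq_sym.
  have m2 : a0 x != y by rewrite eq_sym.
  have m3 : a2 x != y by rewrite eq_sym.
  have m4 : a0 (a2 x) != y by rewrite eq_sym.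
  rewrite (tpermD m2 m3) (tpermD m1 m4).
  by rewrite (negbTE ne1) (negbTE ne2) (negbTE ne3) (negbTE ne4) addbF.
Qed.

Lemma Nv_toggle Z x (s : {perm T}) : closedE Z -> (forall y, s y = a1 (tau Z y)) ->
  [/\ Nv (sd Z (blk x)) <= (Nv Z).+1, Nv Z <= (Nv (sd Z (blk x))).+1 &
      Nv (sd Z (blk x)) = (Nv Z).+1 -> x \in porbit s (a0 (a2 x))].
Proof.
move=> hZ sE.
have h1 := porbits_mul_tperm s x (a0 (a2 x)).
have h2 := porbits_mul_tperm (tperm x (a0 (a2 x)) * s)%g (a0 x) (a2 x).
have c1 := Nv_cycles hZ sE.
have c2 := Nv_cycles (closed_sd hZ (closed_blk x)) (toggle_perm x hZ sE).
rewrite /= in h1 h2.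
have d3 : x != a0 (a2 x) by rewrite eq_sym a02N'.
rewrite d3 a02N in h1 h2.
move: h1 h2 c1 c2.
case: (x \in porbit s (a0 (a2 x))); case: (a0 x \in porbit _ (a2 x)) => /= h1 h2 c1 c2;
  split => //; try lia.
Qed.

Lemma blk_a0 x : blk (a0 x) = blk x.
Proof.
apply/setP => z; apply/blkP/blkP; rewrite ?a0K.
  by case=> ->; [apply: Or42|apply: Or41|rewrite -a02C; apply: Or44|rewrite -a02C a0K; apply: Or43].
by case=> ->; [apply: Or42|apply: Or41|rewrite a02C a0K; apply: Or44|rewrite a02C; apply: Or43].
Qed.

Lemma card_blk x : #|blk x| = 4.
Proof.
have -> : blk x = a0 (a2 x) |: (a2 x |: (x |: [set a0 x])).
  apply/setP => z; rewrite !inE.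
  by case: (z == x); case: (z == a0 x); case: (z == a2 x); case: (z == a0 (a2 x)).
have d1 : x != a0 x by rewrite eq_sym a0F.
have d2 : x != a2 x by rewrite eq_sym a2F.
have d3 : x != a0 (a2 x) by rewrite eq_sym a02N'.
have d4 : a0 x != a2 x by apply: a02N.
have d5 : a0 x != a0 (a2 x) by apply/eqP => /(can_inj a0K) /eqP; rewrite (negbTE d2).
have d6 : a2 x != a0 (a2 x) by rewrite eq_sym a0F.
rewrite !cardsU1 cards1 !inE.
by rewrite !(eq_sym (a0 (a2 x))) (negbTE d3) (negbTE d5) (negbTE d6) !(eq_sym (a2 x)) (negbTE d2) (negbTE d4) (negbTE d1).
Qed.

Lemma rho_exists Z P : closedE Z -> alt a1 (tau Z) P ->
  exists s : {perm T}, forall y, s y = if y \in P then a1 (tau Z y) else y.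
Proof.
move=> hZ hP.
have Pin y : y \in P -> a1 (tau Z y) \in P by move=> yP; rewrite (hP _).1 (hP _).2 yP.
have inj : injective (fun y => if y \in P then a1 (tau Z y) else y).
  move=> y1 y2 /=; case: ifP => h1; case: ifP => h2.
  - by move/(can_inj a1K)/(can_inj (tauK hZ)).
  - by move=> e; move: h2; rewrite -e Pin.
  - by move=> e; move: h1; rewrite e Pin.
  - by [].
by exists (perm inj) => y; rewrite permE.
Qed.

Lemma rho_toggle0 Z P x : closedE Z -> alt a1 (tau Z) P ->
  (forall y, y \in blk x -> (y \in P) = (a0 (a2 y) \in P)) -> x \in P ->
  alt a1 (tau (sd Z (blk x))) P /\ odd (Nv (sd Z (blk x))) = ~~ odd (Nv Z).
Proof.
move=> hZ hP comp xP.
have bx := @blk_in Z x _ hZ.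
have F y : y \in blk x -> (a0 y \in P) = (y \notin P) /\ (a2 y \in P) = (y \notin P).
  move=> yb.
  have wb : a0 (a2 y) \in blk x by rewrite ((closed_blk x) _).1 ((closed_blk x) _).2.
  have h1 := (hP y).2; have h2 := (hP (a0 (a2 y))).2.
  rewrite -(comp _ yb) in h2.
  move: h1 h2; rewrite /tau (bx _ yb) (bx _ wb).
  case: (x \in Z) => h1 h2; split => //.
  - by rewrite -h2 a0K.
  - by rewrite -h2 a02C a2K.
have hZ' := closed_sd hZ (closed_blk x).
have alt' : alt a1 (tau (sd Z (blk x))) P.
  move=> y; split; first exact: (hP y).1.
  rewrite /tau inE; case/boolP: (y \in blk x) => yb.
    by rewrite addbT; case: (y \in Z); [exact: (F y yb).2|exact: (F y yb).1].
  by rewrite addbF; exact: (hP y).2.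
split => //.
set w := a0 (a2 x).
have wP : w \in P by rewrite -comp // (_ : x \in blk x) //; apply/blkP; apply: Or41.
have a0xP : a0 x \notin P by rewrite (F x _).1 ?xP //; apply/blkP; apply: Or41.
have a2xP : a2 x \notin P by rewrite (F x _).2 ?xP //; apply/blkP; apply: Or41.
have d3 : x != w by rewrite eq_sym a02N'.
have [s sE] := rho_exists hZ hP.
have s'E : forall y, (tperm x w * s)%g y = if y \in P then a1 (tau (sd Z (blk x)) y) else y.
  move=> y; rewrite permM.
  case: (tpermP x w y) => [->|->|ne1 ne2].
  - rewrite sE wP xP /tau !inE (bx w); last by apply/blkP; apply: Or44.
    by rewrite eqxx /=; case: (x \in Z); rewrite /w /= ?a0K // a02C a2K.
  - rewrite sE wP xP /tau !inE (bx w); last by apply/blkP; apply: Or44.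
    by rewrite eqxx /= ?orbT; case: (x \in Z); rewrite /w /= ?a0K // -a02C a2K.
  - rewrite sE; case/boolP: (y \in P) => yP //.
    have yb : y \notin blk x.
      apply/negP => /blkP[] e.
      + exact: ne1.
      + by move: a0xP; rewrite -e yP.
      + by move: a2xP; rewrite -e yP.
      + exact: ne2.
    by rewrite /tau inE (negbTE yb) addbF.
have c1 := card_rho a1K (tauK hZ) hP sE.
have c2 := card_rho a1K (tauK hZ') alt' s'E.
rewrite -/(Nv Z) in c1; rewrite -/(Nv (sd Z (blk x))) in c2.
have h := porbits_mul_tperm s x w; rewrite /= d3 in h.
rewrite c1 c2 in h; move: h.
case: (x \notin porbit s w) => /= h; rewrite -?mul2n in h.
  have -> : Nv Z = (Nv (sd Z (blk x))).+1 by lia.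
  by rewrite /= negbK.
have -> : Nv (sd Z (blk x)) = (Nv Z).+1 by lia.
by [].
Qed.

Lemma rho_toggle Z P x : closedE Z -> alt a1 (tau Z) P ->
  (forall y, y \in blk x -> (y \in P) = (a0 (a2 y) \in P)) ->
  alt a1 (tau (sd Z (blk x))) P /\ odd (Nv (sd Z (blk x))) = ~~ odd (Nv Z).
Proof.
move=> hZ hP comp.
case/boolP: (x \in P) => xP; first exact: rho_toggle0.
rewrite -blk_a0; apply: rho_toggle0 => //; first by rewrite blk_a0.
have := (hP x).2; rewrite xP /tau.
case: (x \in Z) => // h.
have e : (a2 x \in P) = (a0 (a2 (a2 x)) \in P) by apply: comp; apply/blkP; apply: Or43.
by rewrite a2K in e; rewrite -e.
Qed.

Lemma in_sd A B z : (z \in sd A B) = (z \in A) (+) (z \in B).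
Proof. by rewrite inE. Qed.

Lemma sd0 Y : sd Y set0 = Y.
Proof. by apply/setP => z; rewrite !inE addbF. Qed.

Lemma blk_sub D x : closedE D -> x \in D -> blk x \subset D.
Proof. by move=> hD xD; apply/subsetP => y yb; rewrite (blk_in hD yb). Qed.

Lemma closed_setD A B : closedE A -> closedE B -> closedE (A :\: B).
Proof. by move=> hA hB x; rewrite !inE (hA x).1 (hB x).1 (hA x).2 (hB x).2. Qed.

Lemma parity Y D : closedE Y -> closedE D ->
  (forall x, x \in D -> Nv (sd Y (blk x)) = (Nv Y).+1) ->
  odd (Nv (sd Y D)) = odd (Nv Y) (+) odd (#|D| %/ 4).
Proof.
move=> hY hD rig.
have [s0 s0E] := perm_tau hY.
have [P hP] := alt_exists a1K (tauK hY) a1F (@tauF Y) s0E.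
have comp : forall y, y \in D -> (y \in P) = (a0 (a2 y) \in P).
  move=> y yD; have [_ _ h] := Nv_toggle y hY s0E.
  exact: (alt_porbit s0E hP (h (rig y yD))).
suff: forall n (D' : {set T}), #|D'| <= n -> D' \subset D -> closedE D' ->
    alt a1 (tau (sd Y D')) P /\ odd (Nv (sd Y D')) = odd (Nv Y) (+) odd (#|D'| %/ 4).
  by move=> /(_ #|D| D (leqnn _) (subxx _) hD) [].
elim=> [|n IH] D' hn hsub hD'.
  have -> : D' = set0 by apply/eqP; rewrite -cards_eq0 -leqn0.
  by rewrite sd0 cards0 div0n addbF.
case/boolP: (D' == set0) => [/eqP ->|/set0Pn[x xD]].
  by rewrite sd0 cards0 div0n addbF.
have bs := blk_sub hD' xD.
set D'' := D' :\: blk x.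
have cD : #|D'| = #|D''| + 4.
  by rewrite cardsD (setIidPr bs) card_blk subnK // -(card_blk x) subset_leq_card.
have hD'' : closedE D'' := closed_setD hD' (closed_blk x).
have hn'' : #|D''| <= n by lia.
have [alt1 par1] := IH D'' hn'' (subset_trans (subsetDl _ _) hsub) hD''.
have -> : sd Y D' = sd (sd Y D'') (blk x).
  apply/setP => z; rewrite !in_sd in_setD; case/boolP: (z \in blk x) => zb.
    by rewrite (subsetP bs _ zb); case: (z \in Y).
  move: zb; case: (_ \in blk x) => //= _.
  by case: (z \in Y); case: (z \in D').
have cmp : forall y, y \in blk x -> (y \in P) = (a0 (a2 y) \in P).
  by move=> y yb; apply: comp; apply: (subsetP hsub); apply: (subsetP bs).
have [alt2 par2] := rho_toggle (closed_sd hY hD'') alt1 cmp.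
split => //; rewrite par2 par1 cD divnDr // divnn /= addn1 /=.
by case: (odd (Nv Y)); case: (odd (#|D''| %/ 4)).
Qed.

Definition Phi Z := Nv Z + Nv (~: Z).

Lemma Phi_toggle Z x : closedE Z ->
  [/\ Phi (sd Z (blk x)) <= Phi Z + 2, Phi Z <= Phi (sd Z (blk x)) + 2 &
     Phi (sd Z (blk x)) = Phi Z + 2 ->
     Nv (sd Z (blk x)) = (Nv Z).+1 /\ Nv (sd (~: Z) (blk x)) = (Nv (~: Z)).+1].
Proof.
move=> hZ.
have [s1 s1E] := perm_tau hZ.
have [s2 s2E] := perm_tau (closed_compl hZ).
have [h1 h2 _] := Nv_toggle x hZ s1E.
have [h3 h4 _] := Nv_toggle x (closed_compl hZ) s2E.
rewrite /Phi compl_sd; split; lia.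
Qed.

Definition between (X W Y : {set T}) := (X :&: W \subset Y) && (Y \subset X :|: W).

Lemma between_trans X W Y Z : between X W Y -> between X Y Z -> between X W Z.
Proof.
case/andP => h1 h2 /andP[h3 h4]; apply/andP; split.
  apply: subset_trans h3; apply/subsetP => z hz; rewrite inE (subsetP h1 z hz) andbT.
  by move: hz; rewrite inE => /andP[].
apply: (subset_trans h4); apply/subsetP => z; rewrite !inE => /orP[->//|zY].
by move: (subsetP h2 z zY); rewrite inE.
Qed.
Lemma between_card X W Y : between X W Y -> Y != W -> #|sd X Y| < #|sd X W|.
Proof.
case/andP => h1 h2 nYW; apply: proper_card; rewrite properEneq; apply/andP; split.
  apply: contra nYW => /eqP e; apply/eqP/setP => z.
  have := congr1 (fun S : {set T} => z \in S) e; rewrite /= !in_sd.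
  by case: (z \in X); case: (z \in Y); case: (z \in W).
apply/subsetP => z; rewrite !in_sd.
have := subsetP h1 z; have := subsetP h2 z; rewrite !inE.
by case: (z \in X); case: (z \in Y); case: (z \in W) => //= ->.
Qed.

Lemma between_toggle X W x : closedE X -> closedE W -> x \in sd X W ->
  between X W (sd W (blk x)).
Proof.
move=> hX hW xD; have bs := blk_sub (closed_sd hX hW) xD.
apply/andP; split; apply/subsetP => z.
  rewrite in_setI => /andP[zX zW]; rewrite in_sd zW /=.
  apply/negP => zb; move: (subsetP bs z zb); by rewrite in_sd zX zW.
rewrite in_sd [z \in X :|: W]in_setU.
case/boolP: (z \in W) => zW; rewrite ?orbT //= => zb.
move: (subsetP bs z zb); by rewrite in_sd (negbTE zW) addbF => ->.
Qed.

Lemma sd_sd X W : sd W (sd X W) = X.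
Proof. by apply/setP => z; rewrite !in_sd; case: (z \in X); case: (z \in W). Qed.

Lemma sd_sdC X W : sd (~: W) (sd X W) = ~: X.
Proof. by apply/setP => z; rewrite !in_sd !inE; case: (z \in X); case: (z \in W). Qed.

Lemma sd_blk_neq W x : sd W (blk x) != W.
Proof.
apply/negP => /eqP e; have := congr1 (fun S : {set T} => x \in S) e; rewrite /= in_sd.
have -> : x \in blk x by apply/blkP; apply: Or41.
by case: (x \in W).
Qed.

Lemma sd_eq0 X W : sd X W = set0 -> X = W.
Proof.
move=> e; apply/setP => z; have := congr1 (fun S : {set T} => z \in S) e; rewrite /= in_sd inE.
by case: (z \in X); case: (z \in W).
Qed.

Lemma G n : forall X W, closedE X -> closedE W -> #|sd X W| <= n -> Phi W + 2 <= Phi X ->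
  exists Y, [/\ closedE Y, between X W Y & Phi Y + 2 = Phi X].
Proof.
elim: n => [|n IH] X W hX hW hn hlt.
  have e : sd X W = set0 by apply/eqP; rewrite -cards_eq0 -leqn0.
  by move: hlt; rewrite (sd_eq0 e); lia.
case: (classic (exists Y, [/\ closedE Y, between X W Y & Phi Y + 2 = Phi X])) => // h.
exfalso.
have small Y : closedE Y -> between X W Y -> Y != W -> Phi X <= Phi Y + 1.
  move=> hY bY nY; rewrite leqNgt; apply/negP => lt.
  have hc := between_card bY nY.
  have c1 : #|sd X Y| <= n by lia.
  have c2 : Phi Y + 2 <= Phi X by lia.
  have [Z [hZ bZ eZ]] := IH X Y hX hY c1 c2.
  by apply: h; exists Z; split => //; apply: between_trans bY bZ.
have hD := closed_sd hX hW.
have [x xD] : exists x, x \in sd X W.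
  case/boolP: (sd X W == set0) => [/eqP /sd_eq0 e|/set0Pn//].
  by move: hlt; rewrite e; lia.
have nW : Phi W + 2 != Phi X.
  apply/negP => /eqP e; apply: h; exists W; split => //.
  by apply/andP; split; [apply: subsetIr | apply: subsetUr].
have each y : y \in sd X W ->
    Phi (sd W (blk y)) = Phi W + 2 /\ Phi X = Phi W + 3.
  move=> yD.
  have hW' := closed_sd hW (closed_blk y).
  have := small _ hW' (between_toggle hX hW yD) (sd_blk_neq W y).
  have [t1 _ _] := Phi_toggle y hW.
  move=> t2; move: nW => /eqP nW; split; lia.
have [_ e3] := each x xD.
have rig1 y : y \in sd X W -> Nv (sd W (blk y)) = (Nv W).+1.
  by move=> yD; have [_ _ t] := Phi_toggle y hW; case: (t (each y yD).1).
have rig2 y : y \in sd X W -> Nv (sd (~: W) (blk y)) = (Nv (~: W)).+1.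
  by move=> yD; have [_ _ t] := Phi_toggle y hW; case: (t (each y yD).1).
have p1 := parity hW hD rig1.
have p2 := parity (closed_compl hW) hD rig2.
rewrite sd_sd in p1; rewrite sd_sdC in p2.
have : odd (Phi X) = odd (Phi W) by rewrite /Phi !oddD p1 p2; do 3 case: (odd _).
by rewrite e3 addn3 /= !negbK => /eqP; case: (odd (Phi W)).
Qed.
End Gem.
Import Order.TTheory GRing.Theory Num.Theory.
Local Open Scope ring_scope.

Lemma norb_eq (T : finType) (r1 r2 : rel T) : r1 =2 r2 -> Defs.norb r1 = Defs.norb r2.
Proof.
move=> e; rewrite /Defs.norb; apply: eq_card => S.
by apply/imsetP/imsetP => -[x hx ->]; exists x => //; apply/setP => y; rewrite !inE (eq_connect e).
Qed.

Theorem corollary1 (D : finType) (a0 a1 a2 : D -> D) (iso : nat)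
  (HG : is_ribbon_graph a0 a1 a2) (k : int) :
  (exists2 A : {set D}, edge_set a0 a2 A & pd_genus a0 a1 a2 iso A = k) ->
  (exists2 B : {set D}, edge_set a0 a2 B & pd_genus a0 a1 a2 iso B = k + 1) ->
  forall m : int, k + 2 <= m -> m <= max_pd_genus a0 a1 a2 iso ->
  exists2 C : {set D}, edge_set a0 a2 C & pd_genus a0 a1 a2 iso C = m.
Proof.
case: HG => -[a0K a1K a2K] [[a0F a1F a2F] [a02C a02N]].
have ecl A : edge_set a0 a2 A -> closedE a0 a2 A.
  move=> /forallP h x; split; apply/idP/idP => hx.
  - by have := implyP (h (a0 x)) hx; rewrite a0K => /andP[].
  - by have := implyP (h x) hx => /andP[].
  - by have := implyP (h (a2 x)) hx; rewrite a2K => /andP[].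
  - by have := implyP (h x) hx => /andP[].
have cle A : closedE a0 a2 A -> edge_set a0 a2 A.
  by move=> h; apply/forallP => x; apply/implyP => hx; rewrite (h x).1 (h x).2 hx.
set c := Defs.norb (gen3 a0 a1 a2).
set e := Defs.norb (Defs.gen2 a0 a2).
have gE A : closedE a0 a2 A ->
    pd_genus a0 a1 a2 iso A = (2 * c + e)%:Z - (Phi a0 a1 a2 A)%:Z.
  move=> hA.
  have e1 : Defs.norb (gen3 (pd0 a0 a2 A) a1 (pd2 a0 a2 A)) = c.
    apply: norb_eq => x y; rewrite /gen3 /pd0 /pd2.
    by case: (x \in A); case: (y == a0 x); case: (y == a1 x); case: (y == a2 x).
  have e2 : Defs.norb (Defs.gen2 (pd0 a0 a2 A) (pd2 a0 a2 A)) = e.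
    apply: norb_eq => x y; rewrite /Defs.gen2 /pd0 /pd2.
    by case: (x \in A); case: (y == a0 x); case: (y == a2 x).
  have e3 : Defs.norb (Defs.gen2 (pd0 a0 a2 A) a1) = Nv a0 a1 a2 (~: A).
    apply: norb_eq => x y; rewrite /Defs.gen2 /pd0 /tau inE.
    by case: (x \in A); case: (y == a0 x); case: (y == a1 x); case: (y == a2 x).
  rewrite /pd_genus /euler_genus e1 e2 e3 /Phi.
  rewrite -/(Nv a0 a1 a2 A).
  lia.
move=> [A hA eA] [B hB eB] m hkm hmM.
have [Z hZ eZ] : exists2 Z, edge_set a0 a2 Z & max_pd_genus a0 a1 a2 iso = pd_genus a0 a1 a2 iso Z.
  rewrite /max_pd_genus; elim/big_rec: _ => [|X y hX [Z hZ ->]].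
    by exists set0 => //; apply/forallP => x; rewrite inE.
  rewrite maxEle; case: ifP => _; [by exists Z | by exists X].
have hcl := ecl _ hZ.
have reach : forall j X, closedE a0 a2 X -> (Phi a0 a1 a2 Z + 2 * j <= Phi a0 a1 a2 X)%N ->
    exists2 Y, closedE a0 a2 Y & (Phi a0 a1 a2 Y + 2 * j = Phi a0 a1 a2 X)%N.
  elim=> [|j IH] X hX hj; first by exists X; rewrite ?addn0.
  have hj' : (Phi a0 a1 a2 Z + 2 * j <= Phi a0 a1 a2 X)%N by lia.
  have [Y hY eY] := IH X hX hj'.
  have h2 : (Phi a0 a1 a2 Z + 2 <= Phi a0 a1 a2 Y)%N by lia.
  have [Y' [hY' _ eY']] := G a0K a1K a2K a0F a1F a2F a02C a02N hY hcl (leqnn _) h2.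
  by exists Y' => //; lia.
rewrite eZ (gE _ hcl) in hmM.
rewrite (gE _ (ecl _ hA)) in eA; rewrite (gE _ (ecl _ hB)) in eB.
set n := `|m - k|%N.
have hn : n%:Z = m - k by rewrite /n; lia.
have hn2 := odd_double_half n.
case: (odd n) hn2 => /= hn2.
- have hj : (Phi a0 a1 a2 Z + 2 * n./2 <= Phi a0 a1 a2 B)%N by lia.
  have [Y hY eY] := reach _ _ (ecl _ hB) hj.
  by exists Y; [apply: cle | rewrite gE //; lia].
- have hj : (Phi a0 a1 a2 Z + 2 * n./2 <= Phi a0 a1 a2 A)%N by lia.
  have [Y hY eY] := reach _ _ (ecl _ hA) hj.
  by exists Y; [apply: cle | rewrite gE //; lia].
Qed.
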